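(* Fix $i$ with $0\le i\le\rho(m)-1$. Define the sequence $(v^{\alpha_i}(n))_{n\ge0}$ by $v^{\alpha_i}(j)=x^{\alpha_i}(j+1)$ for $0\le j\le k-2$, $v^{\alpha_i}(k-1)=1-x^{\alpha_i}(k)$, and $v^{\alpha_i}(n)=\mathbf 1\big[\sum_{j=1}^k\bar a_j v^{\alpha_i}(n-j)-\bar\theta\big]$ for $n\ge k$. Then for every $t\ge k$: (a) $v^{\alpha_i}(t)=0$; (b) $\sum_{j=1}^k\bar a_j v^{\alpha_i}(t-j)\le\bar\theta-2$; and (c) the sequence $v^{\alpha_i}$ has transient length $k-p_i$ and cycle length $1$ (it is eventually the constant sequence $0$).
   Context: For $u\in\mathbb{R}$ let $\mathbf 1[u]=1$ if $u\ge 0$ and $\mathbf 1[u]=0$ if $u<0$. For a $\{0,1\}$-valued sequence $(s(n))_{n\ge0}$ that is eventually periodic, its transient length is the least $T\ge0$ such that there is $P\ge1$ with $s(n+P)=s(n)$ for all $n\ge T$, and its cycle length is the least such $P$ (for that $T$). Let $m$ be a positive integer and let $\rho(m)$ denote the number of primes $p$ with $2m<p<3m$; assume $\rho(m)\ge 2$. List these primes as $p_0>p_1>\dots>p_{\rho(m)-1}$ and put $\alpha_i=3m-p_i$. Let $k=(6m-1)\rho(m)$, $\mu_i=\lfloor k/p_i\rfloor$, $\beta_i=k-p_i\mu_i$. Define weights $\bar a_j$, $1\le j\le k$: if $\rho(m)$ is even, $\bar a_j=2$ if $j=\ell p_i$ for some $i$ and some $\ell$ with $1\le \ell\le 3\rho(m)/2$,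 $\bar a_j=-2$ if $j=\ell p_i$ with $3\rho(m)/2<\ell\le 2\rho(m)$, and $\bar a_j=0$ otherwise; if $\rho(m)$ is odd, $\bar a_j=2$ if $j=\ell p_i$ with $1\le\ell\le (3\rho(m)-1)/2$, $\bar a_j=-2$ if $j=\ell p_i$ with $(3\rho(m)+1)/2\le \ell\le 2\rho(m)-2$, $\bar a_j=-1$ if $j=\ell p_i$ with $\ell\in\{2\rho(m)-1,2\rho(m)\}$, and $\bar a_j=0$ otherwise (well defined since the sets $\{\ell p_i:1\le\ell\le2\rho(m)\}$ are pairwise disjoint). Let $\bar\theta=2\rho(m)$. For each $i$ define $x^{\alpha_i}(t)$ for $0\le t\le k-1$ by $x^{\alpha_i}(t)=1$ if $t=\beta_i+\ell p_i$ for some $0\le \ell\le\mu_i-1$ and $x^{\alpha_i}(t)=0$ otherwise, and for $t\ge k$ by $x^{\alpha_i}(t)=\mathbf 1\big[\sum_{j=1}^k \bar a_j x^{\alpha_i}(t-j)-\bar\theta\big]$. *)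

(* Defs.v *)
From mathcomp Require Import all_boot all_order all_algebra.
Set Implicit Arguments. Unset Strict Implicit. Unset Printing Implicit Defensive.
Import Order.TTheory GRing.Theory Num.Theory.

(* primes p with 2m < p < 3m, listed in DECREASING order p_0 > p_1 > ... *)
Definition primes_between (m : nat) : seq nat :=
  rev (filter prime (iota (2 * m).+1 (m.-1))).

Definition rho (m : nat) : nat := size (primes_between m).

Definition pr (m i : nat) : nat := nth 0 (primes_between m) i.
Definition alpha (m i : nat) : nat := 3 * m - pr m i.

Definition kk (m : nat) : nat := (6 * m - 1) * rho m.
Definition mu (m i : nat) : nat := kk m %/ pr m i.
Definition beta (m i : nat) : nat := kk m - pr m i * mu m i.

(* weight attached to j = l * p_i, 1 <= l <= 2 rho *)
Definition wt (r l : nat) : int :=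
  if ~~ odd r then
    (if l <= (3 * r)./2 then Posz 2 else (-2)%R)
  else
    (if l <= (3 * r - 1)./2 then Posz 2
     else if ((3 * r + 1)./2 <= l) && (l <= 2 * r - 2) then (-2)%R
     else (-1)%R).

(* abar_j : weight if j = l * p_i with some i < rho and 1 <= l <= 2 rho,
   0 otherwise (the sets {l p_i} are pairwise disjoint, so the choice of
   the first such p_i is immaterial). *)
Definition abar (m j : nat) : int :=
  let ok p := [&& p %| j, 1 <= j %/ p & j %/ p <= 2 * rho m] in
  let ps := primes_between m in
  let idx := find ok ps in
  if idx < size ps then wt (rho m) (j %/ nth 0 ps idx) else 0%R.

Definition thetabar (m : nat) : int := Posz (2 * rho m).

Definition ind (u : int) : bool := (0 <= u)%R.

Definition wsum (m : nat) (s : nat -> bool) (n : nat) : int :=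
  \big[+%R/0%R]_(1 <= j < (kk m).+1) (abar m j * Posz (s (n - j)%N : nat))%R.

(* history: values s(0), ..., s(n-1) of the threshold sequence with
   initial values init(t) for t < k and recurrence
   s(t) = 1[sum_j abar_j s(t-j) - theta] for t >= k *)
Fixpoint hist (m : nat) (init : nat -> bool) (n : nat) : seq bool :=
  match n with
  | 0 => [::]
  | n'.+1 =>
      let h := hist m init n' in
      rcons h (if n' < kk m then init n'
               else ind (wsum m (fun t => nth false h t) n' - thetabar m)%R)
  end.

Definition thr_seq (m : nat) (init : nat -> bool) (n : nat) : bool :=
  nth false (hist m init n.+1) n.

Definition x_init (m i : nat) (t : nat) : bool :=
  has (fun l => t == beta m i + l * pr m i) (iota 0 (mu m i)).
Definition xseq (m i : nat) : nat -> bool := thr_seq m (x_init m i).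

Definition v_init (m i : nat) (j : nat) : bool :=
  if j <= kk m - 2 then xseq m i j.+1
  else ~~ xseq m i (kk m).
Definition vseq (m i : nat) : nat -> bool := thr_seq m (v_init m i).

Definition periodic_from (s : nat -> bool) (T P : nat) : Prop :=
  0 < P /\ forall n, T <= n -> s (n + P) = s n.

Definition transient_length (s : nat -> bool) (T : nat) : Prop :=
  (exists P, periodic_from s T P) /\
  forall T', (exists P, periodic_from s T' P) -> T <= T'.

Definition cycle_length (s : nat -> bool) (P : nat) : Prop :=
  exists T, transient_length s T /\ periodic_from s T P /\
    forall P', periodic_from s T P' -> P <= P'.

(* Main.v *)
Require Import Defs.
From mathcomp Require Import all_boot all_order all_algebra.
From mathcomp Require Import zify.
Import Order.TTheory GRing.Theory Num.Theory.

Section Part1.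
Unset Implicit Arguments.

Lemma size_hist m init n : size (hist m init n) = n.
Proof. by elim: n => //= n IH; rewrite size_rcons IH. Qed.

Lemma nth_hist m init n t : t < n -> nth false (hist m init n) t = thr_seq m init t.
Proof.
elim: n => // n IH; rewrite ltnS leq_eqVlt => /orP [/eqP -> | lt].
  by [].
by rewrite /= nth_rcons size_hist lt IH.
Qed.

Lemma thr_rec m init n : 0 < kk m ->
  thr_seq m init n = if n < kk m then init n
     else ind (wsum m (thr_seq m init) n - thetabar m)%R.
Proof.
move=> k0; rewrite /thr_seq /= nth_rcons size_hist ltnn eqxx.
case: ifP => // hn; congr (ind (_ - _)%R).
rewrite /wsum; apply: eq_big_nat => j /andP [j1 jk].
rewrite nth_hist //; lia.
Qed.

End Part1.

Section Part2.
Set Implicit Arguments. Unset Strict Implicit.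

Lemma uniq_pb m : uniq (primes_between m).
Proof. by rewrite /primes_between rev_uniq filter_uniq // iota_uniq. Qed.

Lemma pr_prop m i : i < rho m ->
  [/\ prime (pr m i), 2 * m < pr m i & pr m i < 3 * m].
Proof.
move=> hi; have : pr m i \in primes_between m by apply: mem_nth.
rewrite /primes_between mem_rev mem_filter mem_iota => /andP [pp /andP [a b]].
split => //; lia.
Qed.

Lemma rho_le m : rho m <= m.-1.
Proof.
by rewrite /rho /primes_between size_rev size_filter (leq_trans (count_size _ _)) // size_iota.
Qed.

Lemma pr_inj m i j : i < rho m -> j < rho m -> pr m i = pr m j -> i = j.
Proof.
by move=> hi hj e; apply/eqP; rewrite -(nth_uniq 0 hi hj (uniq_pb m)); apply/eqP.
Qed.

Lemma key a b q1 q2 : prime q1 -> prime q2 -> q1 != q2 -> 0 < b < q1 ->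
  a * q1 = b * q2 -> False.
Proof.
move=> p1 p2 ne /andP [b0 bq] e.
have : q1 %| b * q2 by rewrite -e dvdn_mull.
rewrite Euclid_dvdM // (dvdn_prime2 p1 p2) (negbTE ne) orbF => d.
by have := dvdn_leq b0 d; rewrite leqNgt bq.
Qed.

End Part2.

Section Part3.
Unset Implicit Arguments.
Local Open Scope ring_scope.

Lemma sum_pt (a b c : nat) (F : nat -> int) : (a <= c < b)%N ->
  \sum_(a <= j < b) (if j == c then F j else 0) = F c.
Proof.
move=> /andP [ac cb].
rewrite (@big_cat_nat _ _ _ c) //=; last exact: ltnW.
rewrite [X in _ + X]big_ltn //= eqxx.
rewrite big1_seq; last by move=> j /andP [_]; rewrite mem_index_iota => /andP [_ h]; rewrite ltn_eqF.
rewrite big1_seq; last by move=> j /andP [_]; rewrite mem_index_iota => /andP [h _]; rewrite gtn_eqF.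
by rewrite add0r addr0.
Qed.

Lemma abar_eq m j : (0 < m)%N -> abar m j = \sum_(i' < rho m)
   \sum_(1 <= l < (2 * rho m).+1) (if j == (l * pr m i')%N then wt (rho m) l else 0).
Proof.
move=> m0.
have r2 : forall i', (i' < rho m)%N -> (2 * rho m < pr m i')%N.
  move=> i' hi'; have [_ h _] := pr_prop hi'; have := rho_le m; lia.
rewrite /abar; set ok := fun p => _; case: ifP => hf.
  have hh : has ok (primes_between m) by rewrite has_find.
  have := nth_find 0 hh; set idx := find _ _ in hf *.
  have hidx : (idx < rho m)%N by [].
  rewrite /ok -/(pr m idx) => /and3P [dq l1 l2].
  have [pq _ _] := pr_prop hidx.
  have q0 : (0 < pr m idx)%N by apply: prime_gt0.
  rewrite (bigD1 (Ordinal hidx)) //= [X in _ + X]big1 ?addr0.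
    rewrite (eq_big_nat _ _ (F2 := fun l => if l == (j %/ pr m idx)%N then wt (rho m) l else 0)).
      by rewrite sum_pt //; apply/andP; split.
    move=> l _; rewrite -{1}(divnK dq) eqn_pmul2r //.
    by case: (l =P _) => [->|ne]; [rewrite eqxx|rewrite eq_sym; case: eqP => // e; case: ne].
  move=> i' ne; rewrite big1_seq // => l /andP [_]; rewrite mem_index_iota => /andP [h1 h2].
  case: eqP => // e; exfalso.
  have [pq' _ _] := pr_prop (ltn_ord i').
  apply: (key (a := (j %/ pr m idx)%N) (b := l) (q1 := pr m idx) (q2 := pr m i')) => //.
  - apply/negP => /eqP /(pr_inj hidx (ltn_ord i')) ei; move: ne; rewrite -val_eqE /= ei eqxx //.
  - apply/andP; split => //; have := r2 _ hidx; lia.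
  - by rewrite divnK.
rewrite big1 // => i' _; rewrite big1_seq // => l /andP [_]; rewrite mem_index_iota => /andP [h1 h2].
case: eqP => // e; exfalso.
have [pq' _ _] := pr_prop (ltn_ord i').
have q0 : (0 < pr m i')%N by apply: prime_gt0.
have : has ok (primes_between m).
  apply/hasP; exists (pr m i'); first by apply: mem_nth.
  by rewrite /ok e dvdn_mull // mulnK // h1 /=; lia.
by rewrite has_find hf.
Qed.

End Part3.

Section Part4.
Unset Implicit Arguments.
Local Open Scope ring_scope.

Definition Wsum m (s : nat -> bool) n := \sum_(i' < rho m)
  \sum_(1 <= l < (2 * rho m).+1) wt (rho m) l * Posz (s (n - l * pr m i')%N).

Lemma lp_le_k m i l : (i < rho m)%N -> (l <= 2 * rho m)%N -> (l * pr m i <= kk m)%N.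
Proof.
move=> hi hl; have [_ _ h] := pr_prop hi; rewrite /kk.
have : (l * pr m i <= 2 * rho m * (3 * m - 1))%N by apply: leq_mul; lia.
move=> h2; apply: (leq_trans h2); nia.
Qed.

Lemma wsum_W m s n : (0 < m)%N -> wsum m s n = Wsum m s n.
Proof.
move=> m0; rewrite /wsum /Wsum.
under eq_bigr => j _ do rewrite (abar_eq _ _ m0) mulr_suml.
rewrite exchange_big /=; apply: eq_bigr => i' _.
under eq_bigr => j _ do rewrite mulr_suml.
rewrite exchange_big /=; apply: eq_big_nat => l /andP [l1 l2].
have [pq _ _] := pr_prop (ltn_ord i').
have q0 : (0 < pr m i')%N by apply: prime_gt0.
rewrite -(@sum_pt 1 (kk m).+1 (l * pr m i') (fun j => wt (rho m) l * Posz (s (n - j)%N))).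
  by apply: eq_bigr => j _; case: eqP => [->|]; rewrite ?mul0r.
rewrite ltnS lp_le_k //; rewrite andbT muln_gt0 q0 andbT //.
Qed.

End Part4.

Section Part5.
Set Implicit Arguments. Unset Strict Implicit.
Local Open Scope ring_scope.

Definition PP (r : nat) : nat := if ~~ odd r then (3 * r)./2 else (3 * r - 1)./2.

Lemma wt_lo r l : (l <= PP r)%N -> wt r l = 2.
Proof. by rewrite /wt /PP; case: (odd r) => /= ->. Qed.

Lemma wt_hi r l : (PP r < l)%N -> wt r l <= 0.
Proof.
rewrite /wt /PP; case: (odd r) => /= h; rewrite leqNgt h //.
by case: ifP.
Qed.

Lemma wt_le2 r l : wt r l <= 2.
Proof.
case: (leqP l (PP r)) => h; first by rewrite wt_lo.
by have := wt_hi h; lia.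
Qed.

Lemma PP_bounds r : (2 <= r)%N -> (1 <= PP r < 2 * r)%N.
Proof. rewrite /PP; case: (boolP (odd r)) => /= h r2; lia. Qed.

Lemma sum_const_range (a b : nat) (F : nat -> int) (x : int) :
  (forall l, (a <= l < b)%N -> F l = x) -> \sum_(a <= l < b) F l = x *+ (b - a).
Proof. by move=> h; rewrite (eq_big_nat _ _ h) sumr_const_nat. Qed.

Lemma sum_lo r c : (c <= PP r)%N -> \sum_(1 <= l < c.+1) wt r l = 2 *+ c.
Proof.
move=> h; rewrite (@sum_const_range _ _ _ 2) ?subn1 // => l /andP [_ hl].
by apply: wt_lo; lia.
Qed.

Lemma wt_total r : (2 <= r)%N -> \sum_(1 <= l < (2 * r).+1) wt r l = Posz (2 * r).
Proof.
move=> r2; have hb := PP_bounds r2.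
rewrite (@big_cat_nat _ _ _ (PP r).+1) //=; try lia.
rewrite sum_lo //.
case: (boolP (odd r)) => ho.
  have hP : PP r = (3 * r - 1)./2 by rewrite /PP ho.
  rewrite (@big_cat_nat _ _ _ (2 * r - 1)) //=; try lia.
  rewrite (@sum_const_range _ _ _ (-2)); last first.
    move=> l /andP [h1 h2]; rewrite /wt ho /=.
    have -> : (l <= (3 * r - 1)./2)%N = false by move: h1; rewrite /PP ho /=; lia.
    by have -> : ((3 * r + 1)./2 <= l)%N && (l <= 2 * r - 2)%N by move: h1; rewrite /PP ho /=; lia.
  rewrite (@sum_const_range _ _ _ (-1)); last first.
    move=> l /andP [h1 h2]; rewrite /wt ho /=.
    have -> : (l <= (3 * r - 1)./2)%N = false by lia.
    by have -> : ((3 * r + 1)./2 <= l)%N && (l <= 2 * r - 2)%N = false by lia.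
  move: hb; rewrite /PP ho /= => hb; lia.
have hP : PP r = (3 * r)./2 by rewrite /PP ho.
rewrite (@sum_const_range _ _ _ (-2)); last first.
  move=> l /andP [h1 h2]; rewrite /wt (negbTE ho) /=.
  by have -> : (l <= (3 * r)./2)%N = false by move: h1; rewrite /PP ho /=; lia.
move: hb; rewrite /PP ho /= => hb; lia.
Qed.

Lemma wt_tail r c : (2 <= r)%N -> (1 <= c)%N ->
  \sum_(1 <= l < (2 * r).+1) wt r l * Posz (c < l)%N <= Posz (2 * r) - 2.
Proof.
move=> r2 c1; have hb := PP_bounds r2.
case: (leqP (PP r) c) => hc.
  apply: le_trans (_ : 0 <= _); last by lia.
  apply: sumr_le0 => l _; case: (ltnP c l) => h; rewrite ?mulr0 // mulr1.
  apply: wt_hi; lia.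
rewrite (@big_cat_nat _ _ _ c.+1) //=; try lia.
rewrite big1_seq ?add0r; last first.
  by move=> l /andP [_]; rewrite mem_index_iota => /andP [_ h]; rewrite ltnNge -ltnS h mulr0.
rewrite (eq_big_nat _ _ (F2 := fun l => wt r l)); last by move=> l /andP [h _]; rewrite h mulr1.
have := wt_total r2; rewrite (@big_cat_nat _ _ _ c.+1) //=; try lia.
rewrite sum_lo; last lia.
move: (\sum_(c.+1 <= i < (2 * r).+1) wt r i) => S; lia.
Qed.

End Part5.

Section Part6.
Set Implicit Arguments. Unset Strict Implicit.
Local Open Scope ring_scope.

Lemma sum_ord_bound r (i : nat) (S : 'I_r -> int) (hi: (i<r)%N) y z :
  S (Ordinal hi) <= y -> (forall j, j != Ordinal hi -> S j <= z) ->
  \sum_(j < r) S j <= y + z *+ (r-1).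
Proof.
move=> h1 h2; rewrite (bigD1 (Ordinal hi)) //=; apply: lerD => //.
apply: le_trans (_ : \sum_(j < r | j != Ordinal hi) z <= _).
  by apply: ler_sum.
by rewrite sumr_const cardC1 card_ord subn1.
Qed.

Lemma sum_ord_bound2 r (i : nat) (S : 'I_r -> int) (hi: (i<r)%N) y z w :
  y + z *+ (r-1) <= w ->
  S (Ordinal hi) <= y -> (forall j, j != Ordinal hi -> S j <= z) ->
  \sum_(j < r) S j <= w.
Proof. by move=> hw h1 h2; apply: le_trans (sum_ord_bound h1 h2) hw. Qed.

Lemma sum_le_one (a b : nat) (F : nat -> int) (G : pred nat) x : 0 <= x ->
  (forall l1 l2, (a <= l1 < b)%N -> (a <= l2 < b)%N -> G l1 -> G l2 -> l1 = l2) ->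
  (forall l, (a <= l < b)%N -> F l <= (if G l then x else 0)) ->
  \sum_(a <= l < b) F l <= x.
Proof.
move=> x0 hu hF; case: (boolP (has G (index_iota a b))).
  move/hasP => [l0 hl0 g0]; rewrite (bigD1_seq l0) //=; last exact: iota_uniq.
  have := hF l0; rewrite -mem_index_iota g0 => /(_ hl0) h0.
  suff : \sum_(i <- index_iota a b | i != l0) F i <= 0.
    by move: (\sum_(i <- index_iota a b | i != l0) F i) => S h; lia.
  rewrite big_seq_cond; apply: sumr_le0 => l /andP [hl ne].
  have := hF l; rewrite -mem_index_iota => /(_ hl).
  case: (boolP (G l)) => // gl; have := hu l l0; rewrite -!mem_index_iota => /(_ hl hl0 gl g0) e.
  by rewrite e eqxx in ne.
move/hasPn => hn; apply: le_trans x0; rewrite big_seq; apply: sumr_le0 => l hl.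
by have := hF l; rewrite -mem_index_iota => /(_ hl); rewrite (negbTE (hn l hl)).
Qed.

Section Main.
Variables (m i : nat).
Hypotheses (hm : (0 < m)%N) (hrho : (2 <= rho m)%N) (hi : (i < rho m)%N).

Let p := pr m i.
Let k := kk m.

Lemma pP : [/\ prime p, (2 * m < p)%N & (p < 3 * m)%N].
Proof. exact: pr_prop. Qed.

Lemma p0 : (0 < p)%N.
Proof. by case: pP => /prime_gt0. Qed.

Lemma k0 : (0 < k)%N.
Proof. rewrite /k /kk; nia. Qed.

Lemma r2p i' : (i' < rho m)%N -> (2 * rho m < pr m i')%N.
Proof. move=> h; have [_ h1 _] := pr_prop h; have := rho_le m; lia. Qed.

Lemma muE : (beta m i + mu m i * p = k)%N.
Proof.
rewrite /beta /mu -/p -/k mulnC subnK //.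
by rewrite leq_trunc_div.
Qed.

Lemma mu_ge : (2 * rho m <= mu m i)%N.
Proof.
by rewrite /mu leq_divRL ?p0 // -/p -/k; apply: lp_le_k.
Qed.

Lemma xinit_sub a : (0 < a <= k)%N -> x_init m i (k - a) = (p %| a)%N.
Proof.
move=> /andP [a0 ak]; have hE := muE; have hmu := mu_ge; rewrite /x_init -/p.
apply/hasP/idP.
  move=> [l]; rewrite mem_iota add0n => /andP [_ hl] /eqP e.
  have -> : a = ((mu m i - l) * p)%N by rewrite mulnBl; lia.
  exact: dvdn_mull.
move=> d; exists (mu m i - a %/ p)%N.
  have c1 : (0 < a %/ p)%N by rewrite divn_gt0 ?p0 // dvdn_leq.
  have hc : (a %/ p <= mu m i)%N by rewrite /mu leq_div2r.
  rewrite mem_iota add0n; lia.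
apply/eqP; have ea := divnK d.
have hc : (a %/ p <= mu m i)%N by rewrite /mu leq_div2r.
have : (a %/ p * p <= mu m i * p)%N by rewrite leq_mul2r hc orbT.
rewrite mulnBl; lia.
Qed.

Lemma dvd_term i' l : (i' < rho m)%N -> (0 < l <= 2 * rho m)%N ->
  (p %| l * pr m i')%N = (i' == i).
Proof.
move=> hi' /andP [l0 l2]; have [pp _ _] := pP; have [pp' _ _] := pr_prop hi'.
rewrite Euclid_dvdM // (dvdn_prime2 pp pp').
have -> : (p %| l)%N = false.
  apply/negP => /(dvdn_leq l0); have := r2p hi; rewrite -/p; lia.
rewrite /= /p (nth_uniq 0 hi hi' (uniq_pb m)); by rewrite eq_sym.
Qed.

Lemma xk : xseq m i k = true.
Proof.
rewrite /xseq thr_rec ?k0 // ltnn wsum_W // /Wsum.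
rewrite (bigD1 (Ordinal hi)) //= [X in ind (_ + X - _)]big1 ?addr0.
  rewrite (eq_big_nat _ _ (F2 := fun l => wt (rho m) l)).
    by rewrite wt_total // /thetabar subrr.
  move=> l /andP [l1 l2].
  rewrite thr_rec ?k0 //.
  have hlk := @lp_le_k m i l hi l2; have hp := p0.
  rewrite ifT; last by rewrite -/k; nia.
  rewrite -/k xinit_sub; last by apply/andP; split => //; nia.
  by rewrite dvdn_mull // mulr1.
move=> i' ne; rewrite big1_seq // => l /andP [_]; rewrite mem_index_iota => /andP [l1 l2].
have hlk := @lp_le_k m i' l (ltn_ord i') l2; have [pp' _ _] := pr_prop (ltn_ord i').
have hp' := prime_gt0 pp'.
rewrite thr_rec ?k0 // ifT; last by rewrite -/k; nia.
rewrite -/k xinit_sub; last by apply/andP; split => //; nia.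
rewrite dvd_term //; last by apply/andP.
suff -> : (nat_of_ord i' == i) = false by rewrite mulr0.
by apply/negbTE; move: ne; apply: contra => /eqP e; apply/eqP/val_inj.
Qed.

Lemma vlow n : (n < k)%N -> vseq m i n = (n.+1 < k)%N && (p %| k - n.+1)%N.
Proof.
move=> nk; rewrite /vseq thr_rec ?k0 // nk /v_init -/k.
case: ifP => hn.
  have k2 : (2 <= k)%N by rewrite /k /kk; nia.
  have h1 : (n.+1 < k)%N by lia.
  rewrite h1 /xseq thr_rec ?k0 // h1 -{1}(subKn (ltnW h1)) xinit_sub //; lia.
by rewrite xk; have -> : (n.+1 < k)%N = false by lia.
Qed.

Lemma vterm t i' l : (k <= t)%N -> (forall s, (k <= s < t)%N -> vseq m i s = false) ->
  (i' < rho m)%N -> (0 < l <= 2 * rho m)%N ->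
  vseq m i (t - l * pr m i') =
  (t.+1 - k < l * pr m i')%N && (p %| l * pr m i' - (t.+1 - k))%N.
Proof.
move=> kt IH hi' /andP [l0 l2].
have hlk := @lp_le_k m i' l hi' l2; have [pp' _ _] := pr_prop hi'.
have hp' := prime_gt0 pp'.
have lp0 : (0 < l * pr m i')%N by rewrite muln_gt0 l0.
case: (ltnP (t - l * pr m i') k) => h.
  rewrite vlow //; congr (_ && _); first by rewrite -/k; lia.
  by congr (_ %| _)%N; rewrite -/k; lia.
rewrite IH; last by apply/andP; split => //; lia.
by have -> : (t.+1 - k < l * pr m i')%N = false by rewrite -/k; lia.
Qed.

Lemma vbound t : (k <= t)%N -> (forall s, (k <= s < t)%N -> vseq m i s = false) ->
  Wsum m (vseq m i) t <= Posz (2 * rho m) - 2.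
Proof.
move=> kt IH; set d := (t.+1 - k)%N.
have d0 : (0 < d)%N by rewrite /d; lia.
have hp := p0; have [pp _ _] := pP.
rewrite /Wsum.
case: (boolP (p %| d)%N) => pd.
  apply: (sum_ord_bound2 (hi := hi) (y := Posz (2 * rho m) - 2) (z := 0)); first by rewrite mul0rn addr0.
    rewrite /= (eq_big_nat _ _ (F2 := fun l => wt (rho m) l * Posz (d %/ p < l)%N)).
      apply: wt_tail => //; rewrite divn_gt0 // dvdn_leq //.
    move=> l /andP [l1 l2]; rewrite vterm //; last by apply/andP; split => //; lia.
    rewrite -/d -/p -(divnK pd) ltn_pmul2r // -mulnBl dvdn_mull //.
    by rewrite andbT mulnK.
  move=> j ne; rewrite big_seq; apply: sumr_le0.
  move=> l; rewrite mem_index_iota => /andP [l1 l2]; rewrite vterm //; last by apply/andP; split => //; lia.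
  rewrite -/d.
  case: (boolP ((d < l * pr m j)%N && (p %| l * pr m j - d)%N)) => [/andP [h1 h2]|]; last by rewrite mulr0.
  exfalso; have : (p %| l * pr m j)%N by rewrite -(subnK (ltnW h1)) dvdn_add.
  rewrite dvd_term //; last by apply/andP; split => //; lia.
  by move=> e; move: ne; rewrite -val_eqE /= e.
apply: (sum_ord_bound2 (hi := hi) (y := 0) (z := 2)); first by lia.
  rewrite /= big_seq; apply: sumr_le0.
  move=> l; rewrite mem_index_iota => /andP [l1 l2]; rewrite vterm //; last by apply/andP; split => //; lia.
  rewrite -/d -/p.
  case: (boolP ((d < l * p)%N && (p %| l * p - d)%N)) => [/andP [h1 h2]|]; last by rewrite mulr0.
  exfalso; move: pd; apply/negP/negPn.
  have -> : d = (l * p - (l * p - d))%N by lia.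
  by rewrite dvdn_sub // dvdn_mull.
move=> j ne.
have hj : (nat_of_ord j == i) = false by apply/negbTE; move: ne; apply: contra => /eqP e; apply/eqP/val_inj.
apply: (sum_le_one (G := fun l => (d < l * pr m j)%N && (p %| l * pr m j - d)%N)) => //.
  move=> l1 l2 /andP [a1 b1] /andP [a2 b2] /andP [h1 h2] /andP [h3 h4].
  have gen : forall u v, (1 <= u < (2 * rho m).+1)%N -> (1 <= v < (2 * rho m).+1)%N ->
     (d < u * pr m j)%N -> (d < v * pr m j)%N ->
     (p %| u * pr m j - d)%N -> (p %| v * pr m j - d)%N -> (u < v)%N -> False.
    move=> u v /andP [u1 u2] /andP [v1 v2] hu hv du dv uv.
    have : (p %| (v - u) * pr m j)%N.
      have -> : ((v - u) * pr m j = (v * pr m j - d) - (u * pr m j - d))%N.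
        have : (u * pr m j <= v * pr m j)%N by rewrite leq_mul2r (ltnW uv) orbT.
        rewrite mulnBl; lia.
      exact: dvdn_sub.
    by rewrite dvd_term ?hj //; apply/andP; split; lia.
  case: (ltngtP l1 l2) => // h.
    by exfalso; apply: (gen l1 l2) => //; apply/andP.
  by exfalso; apply: (gen l2 l1) => //; apply/andP.
move=> l /andP [l1 l2]; rewrite vterm //; last by apply/andP; split => //; lia.
rewrite -/d; case: ifP => _; last by rewrite mulr0.
by rewrite mulr1 wt_le2.
Qed.

Lemma vzero t : (k <= t)%N -> vseq m i t = false /\ wsum m (vseq m i) t <= thetabar m - Posz 2.
Proof.
elim/ltn_ind: t => t IH kt.
have hw : wsum m (vseq m i) t <= Posz (2 * rho m) - 2.
  rewrite wsum_W //; apply: vbound => // s /andP [ks st]; exact: (IH s st ks).1.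
split => //.
move: hw; rewrite /vseq thr_rec ?k0 // ltnNge kt /= /ind /thetabar.
move: (wsum _ _ _) => W hw; apply/negbTE; rewrite -ltNge; lia.
Qed.

Lemma kp : (p.+1 <= k)%N.
Proof. have := mu_ge; have := muE; have := p0; nia. Qed.

Lemma vtail n : (k - p <= n)%N -> vseq m i n = false.
Proof.
move=> hn; case: (ltnP n k) => h; last exact: (vzero h).1.
rewrite vlow //; case: (boolP (n.+1 < k)%N) => //= h1.
apply/negP => /(dvdn_leq); have := p0; lia.
Qed.

Lemma vpeak : vseq m i (k - p - 1) = true.
Proof.
have := kp; have := p0 => h0 h1.
rewrite vlow; last lia.
have -> : (k - (k - p - 1).+1 = p)%N by lia.
rewrite dvdnn andbT; lia.
Qed.

End Main.


End Part6.

Theorem lemma10 (m i : nat) (hm : 0 < m) (hrho : 2 <= rho m) (hi : i < rho m) :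
  (forall t, kk m <= t ->
     vseq m i t = false /\
     (wsum m (vseq m i) t <= thetabar m - Posz 2)%R) /\
  transient_length (vseq m i) (kk m - pr m i) /\
  cycle_length (vseq m i) 1.
Proof.
have htr : transient_length (vseq m i) (kk m - pr m i).
  split.
    exists 1%N; split => // n hn; rewrite !(vtail hm hrho hi) //; lia.
  move=> T' [P [P0 hP]]; rewrite leqNgt; apply/negP => lt.
  have it : forall j, vseq m i (kk m - pr m i - 1 + j * P) = vseq m i (kk m - pr m i - 1).
    elim=> [|j IHj]; first by rewrite mul0n addn0.
    by rewrite mulSn (addnC P) addnA hP ?IHj //; lia.
  have := it (kk m); rewrite (vpeak hm hrho hi) (vtail hm hrho hi) //.
  have := @k0 m i hm hrho hi; have : (kk m <= kk m * P)%N by rewrite leq_pmulr.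
  lia.
split; first by move=> t kt; exact: vzero.
split => //; exists (kk m - pr m i); split => //; split.
  by split => // n hn; rewrite !(vtail hm hrho hi) //; lia.
by move=> P' [].
Qed.
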